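(* Let $\sigma:\mathbb{R}\to\mathbb{R}$ be continuous and let $F:\mathbb{R}^d\to\mathbb{R}^d$ be given by $F=A_L\circ\dots\circ A_1$ with $A_j(x)=\sigma(W_jx+b_j)$, $W_j\in\mathbb{R}^{d\times d}$, $b_j\in\mathbb{R}^d$, $j=1,\dots,L$. Then for every compact $K\subset\mathbb{R}^d$ and every $\varepsilon>0$ there exist invertible $\tilde W_j\in\mathbb{R}^{d\times d}$, $j=1,\dots,L$, such that the function $\tilde F=\tilde A_L\circ\dots\circ\tilde A_1$ with $\tilde A_j(x)=\sigma(\tilde W_jx+b_j)$ satisfies $\|\tilde F-F\|_K<\varepsilon$.
   Context: $\sigma$ is applied componentwise to vectors. For $f:K\to\mathbb{R}^m$, $\|f\|_K=\sup\{\|f(x)\|:x\in K\}$ with $\|\cdot\|$ the Euclidean norm. *)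

(* Defs.v *)
From HB Require Import structures.
From mathcomp Require Import all_boot all_order all_algebra.
From mathcomp Require Import all_classical all_reals all_analysis.
Set Implicit Arguments. Unset Strict Implicit. Unset Printing Implicit Defensive.
Import Order.TTheory GRing.Theory Num.Theory.
Local Open Scope ring_scope.

Definition sigmav (R : realType) (d : nat) (sigma : R -> R) (v : 'cV[R]_d)
  : 'cV[R]_d := map_mx sigma v.

Definition enorm (R : realType) (d : nat) (v : 'cV[R]_d) : R :=
  Num.sqrt (\sum_(i < d) v i 0 ^+ 2).

Definition layer (R : realType) (d : nat) (sigma : R -> R)
  (W : 'M[R]_d) (b : 'cV[R]_d) (x : 'cV[R]_d) : 'cV[R]_d :=
  sigmav sigma (W *m x + b).

(* F = A_L o ... o A_1, layers indexed by 'I_L (index j stands for layer j+1). *)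
Definition network (R : realType) (d L : nat) (sigma : R -> R)
  (W : 'I_L -> 'M[R]_d) (b : 'I_L -> 'cV[R]_d) (x : 'cV[R]_d) : 'cV[R]_d :=
  foldl (fun y (j : 'I_L) => layer sigma (W j) (b j) y) x (enum 'I_L).

(* Main.v *)
Require Import Defs.
From HB Require Import structures.
From mathcomp Require Import all_boot all_order all_algebra.
From mathcomp Require Import all_classical all_reals all_analysis.
Import Order.TTheory GRing.Theory Num.Theory.
Import numFieldNormedType.Exports.
Local Open Scope ring_scope.
Local Open Scope classical_set_scope.

Lemma mx_cvg_entry (R : realType) (T : Type) (F : set_system T) (FF : Filter F)
  m n (h : T -> 'M[R]_(m,n)) (M : 'M[R]_(m,n)) :
  (forall i j, (fun p => h p i j) @ F --> M i j) -> h @ F --> M.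
Proof.
move=> H A [P PM sPA] /=.
apply: (@filterS _ _ _ [set p | forall i j, P i j (h p i j)]).
  by move=> p Hp; apply: sPA.
apply: filter_forall => i; apply: filter_forall => j.
exact: (H i j _ (PM i j)).
Qed.

Lemma cvg_sumr (R : realType) (T : Type) (F : set_system T) (FF : Filter F)
  (I : Type) (s : seq I) (P : pred I) (f : I -> T -> R) (a : I -> R) :
  (forall k, f k @ F --> a k) ->
  (fun q => \sum_(k <- s | P k) f k q) @ F --> \sum_(k <- s | P k) a k.
Proof.
move=> H; elim: s => [|k s IH].
  rewrite big_nil; under eq_cvg do rewrite big_nil; exact: cvg_cst.
rewrite big_cons; under eq_cvg do rewrite big_cons.
case: (P k) => //; exact: cvgD.
Qed.

Lemma cvgD' (R : realType) (T : Type) (F : set_system T) (FF : Filter F)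
  (f g : T -> R) (a b : R) : f @ F --> a -> g @ F --> b ->
  (fun x => f x + g x) @ F --> a + b.
Proof. exact: cvgD. Qed.

Lemma cvgM' (R : realType) (T : Type) (F : set_system T) (FF : Filter F)
  (f g : T -> R) (a b : R) : f @ F --> a -> g @ F --> b ->
  (fun x => f x * g x) @ F --> a * b.
Proof. exact: cvgM. Qed.

Lemma cvgMn' (R : realType) (T : Type) (F : set_system T) (FF : Filter F)
  (f : T -> R) (a : R) n : f @ F --> a ->
  (fun x => f x *+ n) @ F --> a *+ n.
Proof. exact: cvgMn. Qed.

Lemma layer_cont (R : realType) (T : topologicalType) (d : nat) (sigma : R -> R)
  (hsigma : continuous sigma) (W : 'M[R]_d) (b : 'cV[R]_d)
  (tf : T -> R) (g : T -> 'cV[R]_d) :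
  continuous tf -> continuous g ->
  continuous (fun p => layer sigma (W + (tf p)%:M) b (g p)).
Proof.
move=> ct cg p; apply: mx_cvg_entry => i j.
rewrite /layer /sigmav.
under eq_cvg do rewrite !mxE.
rewrite !mxE.
pose u := fun x => \sum_j0 (W + (tf x)%:M) i j0 * g x j0 j + b i j.
refine (@cvg_comp _ _ _ u sigma _ (nbhs (u p)) _ _ _); last exact: hsigma; rewrite /u.
apply: cvgD'; last exact: cvg_cst.
apply: cvg_sumr => k.
under eq_cvg do rewrite !mxE.
rewrite !mxE; apply: cvgM'.
  apply: cvgD'; first exact: cvg_cst.
  apply: cvgMn'. exact: ct.
exact: (continuous_comp (cg p) (@coord_continuous R d 1 k j _)) .
Qed.

Lemma fold_cont (R : realType) (T : topologicalType) (d L : nat) (sigma : R -> R)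
  (hsigma : continuous sigma) (W : 'I_L -> 'M[R]_d) (b : 'I_L -> 'cV[R]_d)
  (tf : T -> R) (s : seq 'I_L) : continuous tf ->
  forall g : T -> 'cV[R]_d, continuous g ->
  continuous (fun p => foldl (fun y j => layer sigma (W j + (tf p)%:M) (b j) y) (g p) s).
Proof.
move=> ct; elim: s => [|j s IH] g cg /=; first exact: cg.
apply: (IH (fun p => layer sigma (W j + (tf p)%:M) (b j) (g p))).
exact: layer_cont.
Qed.

Lemma fst_cont (R : realType) d : continuous (fun p : 'cV[R]_d * R => p.1).
Proof. move=> p; exact: cvg_fst. Qed.

Lemma snd_cont (R : realType) d : continuous (fun p : 'cV[R]_d * R => p.2).
Proof. move=> p; exact: cvg_snd. Qed.

Lemma net_cont (R : realType) (d L : nat) (sigma : R -> R)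
  (hsigma : continuous sigma) (W : 'I_L -> 'M[R]_d) (b : 'I_L -> 'cV[R]_d) :
  continuous (fun p : 'cV[R]_d * R => network sigma (fun j => W j + p.2%:M) b p.1).
Proof.
rewrite /network.
move=> p; exact (@fold_cont R _ d L sigma hsigma W b _ (enum (ordinal L)) (@snd_cont R d) _ (@fst_cont R d) p).
Qed.

Lemma char_eval (R : realType) n (A : 'M[R]_n) (t : R) :
  (char_poly (- A)).[t] = \det (A + t%:M).
Proof.
rewrite /char_poly -horner_evalE -det_map_mx; congr (\det _).
apply/matrixP => i j; rewrite !mxE.
rewrite /= horner_evalE hornerD hornerN hornerC hornerMn hornerX.
by rewrite opprK addrC.
Qed.

Lemma unit_near0 (R : realType) n (A : 'M[R]_n) :
  \forall t \near (0:R), t != 0 -> (A + t%:M) \in unitmx.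
Proof.
set p := char_poly (- A).
have p0 : p != 0 by apply: monic_neq0; exact: char_poly_monic.
case: (multiplicity_XsubC p 0) => m [q /implyP/(_ p0) nq Epq].
have q0 : 0 < `|q.[0]| by rewrite normr_gt0; move: nq; rewrite rootE.
have hc : horner q x @[x --> (0:R)] --> q.[0] by exact: continuous_horner.
have := cvgr_dist_lt _ _ hc _ q0.
move=> H; near=> t => tn0.
have Ht : `|q.[0] - q.[t]| < `|q.[0]| by near: t; exact: H.
rewrite unitmxE unitfE -char_eval -/p Epq hornerM horner_exp hornerXsubC subr0.
rewrite mulf_neq0 ?expf_neq0 //.
apply/eqP => qt0; move: Ht; rewrite qt0 subr0 ltxx.
Unshelve. all: by end_near. Qed.

Lemma entry_le (R : realType) d (v : 'cV[R]_d) i : `|v i 0| <= `|v|.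
Proof.
have -> : `|v| = mx_norm v by [].
rewrite mx_normrE.
exact: (le_bigmax 0 (fun ij : 'I_d * 'I_1 => `|v ij.1 ij.2|) (i, 0)).
Qed.

Lemma enorm_le (R : realType) d (v : 'cV[R]_d) : enorm v <= d.+1%:R * `|v|.
Proof.
rewrite /enorm.
have h0 : 0 <= d.+1%:R * `|v| by rewrite mulr_ge0.
rewrite -(ger0_norm h0) -sqrtr_sqr ler_sqrt ?sqr_ge0 //.
apply: (@le_trans _ _ (\sum_(i < d) `|v|^+2)).
  apply: ler_sum => i _.
  rewrite -real_normK ?num_real //.
  by rewrite lerXn2r ?nnegrE ?normr_ge0 ?entry_le.
rewrite sumr_const card_ord -[_ *+ d]mulr_natr exprMn [X in _ <= X]mulrC.
apply: ler_wpM2l; first exact: sqr_ge0.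
rewrite -natrX ler_nat.
by rewrite (leq_trans (leqnSn d)) // -{1}(muln1 d.+1) expnS leq_mul2l expn_gt0.
Qed.

Theorem lemma7 (R : realType) (d L : nat) (sigma : R -> R)
  (hsigma : continuous (sigma : R -> R))
  (W : 'I_L -> 'M[R]_d) (b : 'I_L -> 'cV[R]_d)
  (K : set 'cV[R]_d) (hK : compact K) (eps : R) (heps : 0 < eps) :
  exists Wt : 'I_L -> 'M[R]_d,
    (forall j, Wt j \in unitmx) /\
    exists2 M : R, M < eps &
      forall x, K x -> enorm (network sigma Wt b x - network sigma W b x) <= M.
Proof.
pose N := fun p : 'cV[R]_d * R => network sigma (fun j => W j + p.2%:M) b p.1.
have cN : continuous N := @net_cont R d L sigma hsigma W b.
pose D := fun p : 'cV[R]_d * R => N p - N (p.1, 0).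
have cD : continuous D.
  move=> p; apply: cvgB; first exact: cN.
  apply: (continuous_comp (f := fun q : 'cV[R]_d * R => (q.1, 0))); last exact: cN.
  apply: (@cvg_pair _ _ _ _ (nbhs p.1) (nbhs (0:R))); first exact: cvg_fst.
  exact: cvg_cst.
pose e := eps / d.+1%:R / 2.
have e0 : 0 < e by rewrite /e !divr_gt0.
have loc : forall x, K x -> \forall x' \near x & t \near (0:R), `|D (x', t)| < e.
  move=> x Kx.
  have := cvgr_dist_lt _ _ (cD (x, 0)) _ e0.
  have -> : D (x, 0) = 0 by rewrite /D subrr.
  move=> H; have FP : Filter (filter_prod (nbhs x) (nbhs (0:R))) by apply: filter_prod_filter.
  have H' : filter_prod (nbhs x) (nbhs (0:R)) (fun p => `|0 - D p| < e) := H (nbhs_filter (x, 0)).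
  rewrite /prop_near2; move: H'; apply: (@filterS _ _ FP) => -[x' t] /=; rewrite sub0r normrN.
  done.
have := (proj1 (compact_near_coveringP K) hK _ (nbhs (0:R)) (fun t x' => `|D (x', t)| < e) _ loc).
move=> /(_ (nbhs_filter _)) Hcov.
have Hinv : \forall t \near (0:R), forall j, t != 0 -> (W j + t%:M) \in unitmx.
  apply: (@filter_forall _ _ (fun j t => t != 0 -> (W j + t%:M) \in unitmx) (nbhs (0:R)) (nbhs_filter _)) => j; exact: unit_near0.
have [r r0 Hr] : nbhs_ball (0:R) (fun t => (forall x', K x' -> `|D (x', t)| < e) /\
   forall j, t != 0 -> (W j + t%:M) \in unitmx).
  by apply/nbhs_ballP; apply: filterS (filterI Hcov Hinv) => t [H1 H2]; split.
have rb : ball (0:R) r (r / 2).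
  by rewrite /ball /= sub0r normrN ger0_norm ?divr_ge0 ?ltW // ltr_pdivrMr // ltr_pMr // ltr1n.
have [H1 H2] := Hr _ rb.
have r20 : r / 2 != 0 by rewrite gt_eqF // divr_gt0.
exists (fun j => W j + (r / 2)%:M); split; first by move=> j; exact: H2.
exists (d.+1%:R * e).
  rewrite /e mulrC mulrAC divfK ?pnatr_eq0 //.
  by rewrite ltr_pdivrMr // ltr_pMr // ltr1n.
move=> x Kx.
have EW : (fun j => W j + 0%:M) = W.
  by apply: funext => j; apply/matrixP => i k; rewrite !mxE mul0rn addr0.
apply: (le_trans (@enorm_le R d _)).
apply: ler_wpM2l; first by [].
have := H1 x Kx; rewrite /D /N /= EW => h.
exact: ltW.
Qed.
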